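(* Let $r\in(0,1)$ and $S_2^{in}>0$ be fixed, and work in the plane $(D,S_1^{in})$. Suppose $m_1>\mu_2(S_2^{in})$ and let $D_1^*=r\mu_2(S_2^{in})$, $D_2^*=(1-r)\mu_2(S_2^{in})$. Then the curve $\gamma_0=\{S_1^{in}=\lambda_1^1(D,r)\}$ and the vertical line $\gamma_6=\{D=D_1^*\}$ intersect at $P_1=(D_1^*,\lambda_1^1(D_1^*,r))$. If in addition $S_2^{in}\ge S_2^m$, then $\gamma_0$, $\gamma_5=\{S_1^{in}=F_{12}(D,r,S_2^{in})\}$ and $\gamma_6$ intersect at the same point $P_1$; if $S_2^{in}<S_2^m$, then $\gamma_0$, $\gamma_4=\{S_1^{in}=F_{11}(D,r,S_2^{in})\}$ and $\gamma_6$ intersect at $P_1$. Moreover (for $D$ where the functions are defined): \begin{itemize} \item if $D<D_1^*$, then $F_{11}(D,r,S_2^{in})<\lambda_1^1(D,r)<F_{12}(D,r,S_2^{in})$; \item if $D>D_1^*$ and $S_2^{in}\ge S_2^m$, then $F_{11}<F_{12}<\lambda_1^1$; \item if $D>D_1^*$ and $S_2^{in}<S_2^m$, then $\lambda_1^1<F_{11}<F_{12}$. \end{itemize} Likewise, the curve $\gamma_1=\{S_1^{in}=\lambda_1^2(D,r)\}$ and the vertical line $\gamma_7=\{D=D_2^*\}$ intersect at $P_2=(D_2^*,\lambda_1^2(D_2^*,r))$; if $S_2^{in}\ge S_2^m$, then $\gamma_1$, $\gamma_3=\{S_1^{in}=F_{22}(D,r,S_2^{in})\}$ and $\gamma_7$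 intersect at $P_2$; if $S_2^{in}<S_2^m$, then $\gamma_1$, $\gamma_2=\{S_1^{in}=F_{21}(D,r,S_2^{in})\}$ and $\gamma_7$ intersect at $P_2$. Moreover: \begin{itemize} \item if $D<D_2^*$, then $F_{21}<\lambda_1^2<F_{22}$; \item if $D>D_2^*$ and $S_2^{in}\ge S_2^m$, then $F_{21}<F_{22}<\lambda_1^2$; \item if $D>D_2^*$ and $S_2^{in}<S_2^m$, then $\lambda_1^2<F_{21}<F_{22}$. \end{itemize}
   Context: Let $k_1,k_2>0$, $r_1=r$, $r_2=1-r$, $D_i=D/r_i$. $\mu_1\in C^1(\mathbb R_+)$ with $\mu_1(0)=0$, $\mu_1(+\infty)=m_1$, $\mu_1'>0$ on $(0,\infty)$; $\mu_2\in C^1(\mathbb R_+)$ with $\mu_2(0)=0$, $\mu_2(+\infty)=0$, and there is $S_2^m>0$ with $\mu_2'>0$ on $(0,S_2^m)$, $\mu_2'<0$ on $(S_2^m,\infty)$. For $i=1,2$: $\lambda_1^i(D,r)$ is the unique solution of $\mu_1(S)=D_i$ for $0<D<r_im_1$ ($+\infty$ otherwise); $\lambda_2^{i1}(D,r)\le\lambda_2^{i2}(D,r)$ are the solutions of $\mu_2(S)=D_i$ for $0<D\le r_i\mu_2(S_2^m)$ ($+\infty$ otherwise); $F_{ij}(D,r,S_2^{in})=\lambda_1^i(D,r)+\frac{k_1}{k_2}(\lambda_2^{ij}(D,r)-S_2^{in})$, defined for $0<D<\min(r_im_1,r_i\mu_2(S_2^m))$. *)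

(* Defs.v *)
From HB Require Import structures.
From mathcomp Require Import all_boot all_order all_algebra.
From mathcomp Require Import all_classical all_reals all_analysis.
Set Implicit Arguments. Unset Strict Implicit. Unset Printing Implicit Defensive.
Import Order.TTheory GRing.Theory Num.Theory numFieldNormedType.Exports.
Local Open Scope classical_set_scope.
Local Open Scope ring_scope.

Section Defs.
Variable R : realType.

(* lambda_1^i(D,r): the (unique) solution S >= 0 of mu1(S) = D / r_i.
   Only used for 0 < D < r_i m1 (outside, the value is irrelevant junk). *)
Definition lambda1 (mu1 : R -> R) (ri D : R) : R :=
  xget 0 [set S | 0 <= S /\ mu1 S = D / ri].

Definition lambda2_lo (mu2 : R -> R) (ri D : R) : R :=
  xget 0 [set S | [/\ 0 <= S, mu2 S = D / ri &
                  forall S', 0 <= S' -> mu2 S' = D / ri -> S <= S']].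

Definition lambda2_hi (mu2 : R -> R) (ri D : R) : R :=
  xget 0 [set S | [/\ 0 <= S, mu2 S = D / ri &
                  forall S', 0 <= S' -> mu2 S' = D / ri -> S' <= S]].

Definition lambda2 (mu2 : R -> R) (ri : R) (j : nat) (D : R) : R :=
  if j == 1%N then lambda2_lo mu2 ri D else lambda2_hi mu2 ri D.

Definition Fij (mu1 mu2 : R -> R) (k1 k2 ri : R) (j : nat) (S2in D : R) : R :=
  lambda1 mu1 ri D + k1 / k2 * (lambda2 mu2 ri j D - S2in).

(* graph {S1in = f(D)} of f over the domain dom, in the (D, S1in) plane *)
Definition graph (dom : set R) (f : R -> R) : set (R * R) :=
  [set p | dom p.1 /\ p.2 = f p.1].

Definition vert_line (a : R) : set (R * R) := [set p | p.1 = a].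

End Defs.

(* Main.v *)
Require Import Defs.
From HB Require Import structures.
From mathcomp Require Import all_boot all_order all_algebra.
From mathcomp Require Import all_classical all_reals all_analysis.
Import Order.TTheory GRing.Theory Num.Theory numFieldNormedType.Exports.
Local Open Scope classical_set_scope.
Local Open Scope ring_scope.

Section H.
Variables (R : realType) (mu2 : R -> R) (S2m : R).
Hypotheses  (mu2_cont : {within [set x : R | 0 <= x], continuous mu2})
  (mu2_der : forall x, 0 < x -> derivable mu2 x 1)
  (mu2_0 : mu2 0 = 0)
  (mu2_lim : mu2 x @[x --> +oo] --> 0)
  (S2m_pos : 0 < S2m)
  (mu2'_pos : forall x, 0 < x < S2m -> 0 < (derive1 mu2) x)
  (mu2'_neg : forall x, S2m < x -> (derive1 mu2) x < 0).

Lemma contab a b : 0 <= a -> {within `[a, b], continuous mu2}.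
Proof.
move=> a0; apply: continuous_subspaceW mu2_cont => x /=; rewrite in_itv /= => /andP[ax _].
exact: le_trans ax.
Qed.

Lemma inc x y : 0 <= x -> x < y -> y <= S2m -> mu2 x < mu2 y.
Proof.
move=> x0 xy yS; apply: (@gtr0_derive1_incr _ _ 0 S2m) => //.
- by move=> z; rewrite in_itv /= => /andP[z0 _]; apply: mu2_der.
- exact: contab.
Qed.

Lemma dec x y : S2m <= x -> x < y -> mu2 y < mu2 x.
Proof.
move=> Sx xy; apply: (@ltr0_derive1_decr _ _ S2m y) => //.
- by move=> z; rewrite in_itv /= => /andP[z0 _]; apply: mu2_der; exact: lt_trans z0.
- by move=> z; rewrite in_itv /= => /andP[z0 zS]; apply: mu2'_neg.
- by apply: contab; exact: ltW.
Qed.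

Lemma big c : 0 < c -> exists M, forall x, M < x -> mu2 x < c.
Proof.
move=> c0; have := @cvgr_lt _ _ _ _ _ _ mu2_lim c c0.
by case=> M [_ HM]; exists M => x Mx; apply: HM.
Qed.

Lemma pos x : 0 < x -> 0 < mu2 x.
Proof.
move=> x0; have [xS|Sx] := leP x S2m.
  by rewrite -mu2_0; apply: inc.
rewrite ltNge; apply/negP => hx.
have h1 : mu2 (x+1) < mu2 x by apply: dec; [exact: ltW | rewrite ltrDl].
have := @cvgr_gt _ _ _ _ _ _ mu2_lim (mu2 (x+1)).
rewrite (lt_le_trans h1 hx) => /(_ _ isT) [M [_ HM]].
set t := Num.max (M + 1) (x + 2).
have Mt : M < t by rewrite lt_max ltrDl ltr01.
have := HM t Mt; rewrite ltNge => /negP; apply; apply: ltW; apply: dec.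
  by rewrite (le_trans (ltW Sx)) // lerDl.
by rewrite lt_max ltrD2l ltr1n orbT.
Qed.

Lemma lo_eq ri D a : 0 <= a <= S2m -> mu2 a = D / ri -> lambda2_lo mu2 ri D = a.
Proof.
move=> /andP[a0 aS] ha; rewrite /lambda2_lo.
have Pa : forall S', 0 <= S' -> mu2 S' = D / ri -> a <= S'.
  move=> S' S0 hS; rewrite leNgt; apply/negP => Sa.
  by have := @inc S' a S0 Sa aS; rewrite hS ha ltxx.
apply: xget_unique; first by split.
move=> y [y0 hy Hy]; apply/eqP; rewrite eq_le (Hy a a0 ha) Pa //.
Qed.

Lemma hi_eq ri D b : S2m <= b -> mu2 b = D / ri -> lambda2_hi mu2 ri D = b.
Proof.
move=> Sb hb; rewrite /lambda2_hi.
have b0 : 0 <= b by apply: le_trans Sb; exact: ltW.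
have Pb : forall S', 0 <= S' -> mu2 S' = D / ri -> S' <= b.
  move=> S' S0 hS; rewrite leNgt; apply/negP => bS.
  by have := @dec b S' Sb bS; rewrite hS hb ltxx.
apply: xget_unique; first by split.
move=> y [y0 hy Hy]; apply/eqP; rewrite eq_le (Hy b b0 hb) Pb //.
Qed.

Lemma ex_lo c : 0 < c <= mu2 S2m -> exists2 a, 0 <= a <= S2m & mu2 a = c.
Proof.
move=> /andP[c0 cS].
have := @IVT R mu2 0 S2m c (ltW S2m_pos) (@contab 0 S2m (lexx _)).
rewrite mu2_0; case.
  have m0 : 0 <= mu2 S2m by apply: le_trans cS; exact: ltW.
  by rewrite (min_idPl m0) (max_idPr m0) (ltW c0).
by move=> a; rewrite in_itv /= => ha hc; exists a.
Qed.

Lemma ex_hi c : 0 < c <= mu2 S2m -> exists2 b, S2m <= b & mu2 b = c.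
Proof.
move=> /andP[c0 cS].
have [M HM] := @big c c0.
set t := Num.max (M + 1) (S2m + 1).
have Mt : M < t by rewrite lt_max ltrDl ltr01.
have St : S2m <= t by rewrite le_max lerDl ler01 orbT.
have ht := HM t Mt.
have := @IVT R mu2 S2m t c St (@contab S2m t (ltW S2m_pos)); case.
  have le1 : mu2 t <= mu2 S2m by apply: le_trans cS; exact: ltW.
  by rewrite (min_idPr le1) (max_idPl le1) (ltW ht).
by move=> b; rewrite in_itv /= => /andP[hb _] hc; exists b.
Qed.

Lemma le_top x : 0 <= x -> mu2 x <= mu2 S2m.
Proof.
move=> x0; have [xS|Sx] := leP x S2m.
  by move: xS; rewrite le_eqVlt => /orP[/eqP->//|xS]; apply/ltW/inc.
by apply/ltW/dec.
Qed.

Lemma ab_lt a b c : a <= S2m -> S2m <= b -> mu2 a = c -> mu2 b = c -> c < mu2 S2m -> a < b.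
Proof.
move=> aS Sb ha hb cS; rewrite lt_neqAle (le_trans aS Sb) andbT.
apply/eqP => ab; move: aS Sb; rewrite ab => bS Sb.
have e : b = S2m by apply/le_anti; rewrite bS Sb.
by move: cS; rewrite -hb e ltxx.
Qed.

Lemma lo_lt a c s : 0 <= a <= S2m -> mu2 a = c -> 0 <= s -> c < mu2 s -> a < s.
Proof.
move=> /andP[a0 aS] ha s0 cs; rewrite ltNge; apply/negP; rewrite le_eqVlt => /orP[/eqP e|sa].
  by move: cs; rewrite e ha ltxx.
by have := @inc s a s0 sa aS; rewrite ha => /(lt_trans cs); rewrite ltxx.
Qed.

Lemma hi_gt b c s : S2m <= b -> mu2 b = c -> c < mu2 s -> s < b.
Proof.
move=> Sb hb cs; rewrite ltNge; apply/negP; rewrite le_eqVlt => /orP[/eqP e|bs].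
  by move: cs; rewrite -e hb ltxx.
by have := @dec b s Sb bs; rewrite hb => /(lt_trans cs); rewrite ltxx.
Qed.

Lemma hi_lt b c s : S2m <= s -> mu2 b = c -> mu2 s < c -> b < s.
Proof.
move=> Ss hb cs; rewrite ltNge; apply/negP; rewrite le_eqVlt => /orP[/eqP e|sb].
  by move: cs; rewrite e hb ltxx.
by have := @dec s b Ss sb; rewrite hb => /(lt_trans cs); rewrite ltxx.
Qed.

Lemma lo_gt a c s : 0 <= a -> mu2 a = c -> s <= S2m -> mu2 s < c -> s < a.
Proof.
move=> a0 ha sS cs; rewrite ltNge; apply/negP; rewrite le_eqVlt => /orP[/eqP e|sa].
  by move: cs; rewrite -e ha ltxx.
by have := @inc a s a0 sa sS; rewrite ha => /(lt_trans cs); rewrite ltxx.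
Qed.

Lemma kpos_lt (k l x y : R) : 0 < k -> x < y -> l + k * x < l + k * y.
Proof. by move=> k0 xy; rewrite ltrD2l ltr_pM2l. Qed.

Lemma kneg (k l x : R) : 0 < k -> x < 0 -> l + k * x < l.
Proof. by move=> k0 x0; rewrite gtrDl pmulr_rlt0. Qed.
Lemma kposl (k l x : R) : 0 < k -> 0 < x -> l < l + k * x.
Proof. by move=> k0 x0; rewrite ltrDl pmulr_rgt0. Qed.

Lemma half (mu1 : R -> R) (m1 k1 k2 s ri : R) :
  0 < k1 -> 0 < k2 -> 0 < ri -> 0 < s -> mu2 s < m1 ->
  let Ds := ri * mu2 s in
  let dom1 := [set D : R | 0 < D < ri * m1] in
  let dom2 := [set D : R | 0 < D <= ri * mu2 S2m] in
  let domF := [set D : R | 0 < D < Num.min (ri * m1) (ri * mu2 S2m)] in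
  let l := lambda1 mu1 ri in
  let F j := Fij mu1 mu2 k1 k2 ri j s in
   graph dom1 l `&` vert_line Ds = [set (Ds, l Ds)] /\
   (S2m <= s ->
      graph dom1 l `&` graph (dom1 `&` dom2) (F 2%N) `&` vert_line Ds
      = [set (Ds, l Ds)]) /\ (s < S2m ->
      graph dom1 l `&` graph (dom1 `&` dom2) (F 1%N) `&` vert_line Ds
      = [set (Ds, l Ds)]) /\ (forall D, domF D -> D < Ds ->
      F 1%N D < l D < F 2%N D)
  /\ (forall D, domF D -> Ds < D -> S2m <= s ->
      F 1%N D < F 2%N D < l D) /\ (forall D, domF D -> Ds < D -> s < S2m ->
      l D < F 1%N D < F 2%N D).
Proof.
move=> k10 k20 ri0 s0 sm1 Ds dom1 dom2 domF l F.
have ms0 : 0 < mu2 s by apply: pos.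
have riN : ri != 0 by rewrite gt_eqF.
have Dsc : Ds / ri = mu2 s by rewrite /Ds [ri * _]mulrC mulfK.
have Ds1 : dom1 Ds by rewrite /dom1 /= /Ds mulr_gt0 //= ltr_pM2l.
have Ds2 : dom2 Ds by rewrite /dom2 /= /Ds mulr_gt0 //= ler_pM2l // le_top // ltW.
have k0 : 0 < k1 / k2 by rewrite divr_gt0.
have Feq : forall j, lambda2 mu2 ri j Ds = s -> F j Ds = l Ds.
  by move=> j hj; rewrite /F /Fij hj subrr mulr0 addr0.
have gen : forall j, lambda2 mu2 ri j Ds = s ->
    graph dom1 l `&` graph (dom1 `&` dom2) (F j) `&` vert_line Ds = [set (Ds, l Ds)].
  move=> j hj; apply/seteqP; split => -[x y] /=.
    by rewrite /graph /vert_line /= => -[[[_ ->] _] ->].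
  case=> -> ->; rewrite /graph /vert_line /=; split => //; split; split => //.
  by rewrite Feq.
split.
  apply/seteqP; split => -[x y] /=.
    by rewrite /graph /vert_line /= => -[[_ ->] ->].
  by case=> -> ->; rewrite /graph /vert_line /=.
split.
  move=> Ss; apply: gen; rewrite /lambda2 /=; apply: hi_eq => //.
split.
  move=> sS; apply: gen; rewrite /lambda2 /=; apply: lo_eq => //.
  by rewrite (ltW s0) (ltW sS).
have core : forall D, domF D -> exists a b, [/\ 0 <= a <= S2m, S2m <= b,
    mu2 a = D / ri, mu2 b = D / ri & D / ri < mu2 S2m] /\
    [/\ F 1%N D = l D + k1 / k2 * (a - s), F 2%N D = l D + k1 / k2 * (b - s) &
        (D < Ds) = (D / ri < mu2 s)].
  move=> D; rewrite /domF /= lt_min => /andP[D0 /andP[_ DS]].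
  have Dc : D = ri * (D / ri) by rewrite mulrC divfK.
  have c0 : 0 < D / ri by rewrite divr_gt0.
  have cS : D / ri < mu2 S2m by move: DS; rewrite {1}Dc ltr_pM2l.
  have hc : 0 < D / ri <= mu2 S2m by rewrite c0 ltW.
  have [a ha1 ha2] := @ex_lo (D / ri) hc.
  have [b hb1 hb2] := @ex_hi (D / ri) hc.
  exists a, b; split => //; split.
  - by rewrite /F /Fij /lambda2 /= (@lo_eq ri D a ha1 ha2).
  - by rewrite /F /Fij /lambda2 /= (@hi_eq ri D b hb1 hb2).
  - by rewrite {1}Dc /Ds ltr_pM2l.
split.
  move=> D hD DDs; have [a [b [[ha1 hb1 ha2 hb2 cS] [e1 e2 e3]]]] := core D hD.
  rewrite e3 in DDs; rewrite e1 e2; apply/andP; split.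
    rewrite gtrDl pmulr_rlt0 //.
    by rewrite subr_lt0; exact: (@lo_lt a (D / ri) s ha1 ha2 (ltW s0) DDs).
  rewrite ltrDl pmulr_rgt0 //.
  by rewrite subr_gt0; exact: (@hi_gt b (D / ri) s hb1 hb2 DDs).
split.
  move=> D hD DDs Ss; have [a [b [[ha1 hb1 ha2 hb2 cS] [e1 e2 e3]]]] := core D hD.
  have DDs' : mu2 s < D / ri by rewrite -(ltr_pM2l ri0) -/Ds [ri * (D / ri)]mulrC divfK.
  rewrite e1 e2; apply/andP; split.
    apply: kpos_lt => //; rewrite ltrD2r; apply: (@ab_lt a b (D / ri)) => //; by case/andP: ha1.
  rewrite gtrDl pmulr_rlt0 //.
  by rewrite subr_lt0; exact: (@hi_lt b (D / ri) s Ss hb2 DDs').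
move=> D hD DDs sS; have [a [b [[ha1 hb1 ha2 hb2 cS] [e1 e2 e3]]]] := core D hD.
have DDs' : mu2 s < D / ri by rewrite -(ltr_pM2l ri0) -/Ds [ri * (D / ri)]mulrC divfK.
rewrite e1 e2; apply/andP; split.
  rewrite ltrDl pmulr_rgt0 //.
  rewrite subr_gt0; case/andP: ha1 => a0 _; exact: (@lo_gt a (D / ri) s a0 ha2 (ltW sS) DDs').
apply: kpos_lt => //; rewrite ltrD2r; apply: (@ab_lt a b (D / ri)) => //; by case/andP: ha1.
Qed.
End H.

Theorem proposition4p2 (R : realType) (mu1 mu2 : R -> R) (m1 S2m k1 k2 r S2in : R)
  (* mu1 in C^1(R_+), mu1(0) = 0, mu1(+oo) = m1, mu1' > 0 on (0,oo) *)
  (mu1_cont : {within [set x : R | 0 <= x], continuous mu1})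
  (mu1_der : forall x, 0 < x -> derivable mu1 x 1)
  (mu1_C1 : forall x, 0 < x -> {for x, continuous (derive1 mu1)})
  (mu1_0 : mu1 0 = 0)
  (mu1_lim : mu1 x @[x --> +oo] --> m1)
  (mu1'_pos : forall x, 0 < x -> 0 < (derive1 mu1) x)
  (* mu2 in C^1(R_+), mu2(0) = 0, mu2(+oo) = 0, increasing then decreasing *)
  (mu2_cont : {within [set x : R | 0 <= x], continuous mu2})
  (mu2_der : forall x, 0 < x -> derivable mu2 x 1)
  (mu2_C1 : forall x, 0 < x -> {for x, continuous (derive1 mu2)})
  (mu2_0 : mu2 0 = 0)
  (mu2_lim : mu2 x @[x --> +oo] --> 0)
  (S2m_pos : 0 < S2m)
  (mu2'_pos : forall x, 0 < x < S2m -> 0 < (derive1 mu2) x)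
  (mu2'_neg : forall x, S2m < x -> (derive1 mu2) x < 0)
  (k1_pos : 0 < k1) (k2_pos : 0 < k2)
  (r_pos : 0 < r) (r_lt1 : r < 1)
  (S2in_pos : 0 < S2in)
  (m1_gt : mu2 S2in < m1) :
  let r1 := r in let r2 := 1 - r in
  let D1s := r * mu2 S2in in let D2s := (1 - r) * mu2 S2in in
  (* natural domains of lambda_1^i, lambda_2^{ij}, and the (open) domain of F_ij *)
  let dom1 ri := [set D : R | 0 < D < ri * m1] in
  let dom2 ri := [set D : R | 0 < D <= ri * mu2 S2m] in
  let domF ri := [set D : R | 0 < D < Num.min (ri * m1) (ri * mu2 S2m)] in
  let l11 := lambda1 mu1 r1 in let l12 := lambda1 mu1 r2 in
  let F i j := Fij mu1 mu2 k1 k2 (if i == 1%N then r1 else r2) j S2in in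
  (
   (* point P1 *)
   graph (dom1 r1) l11 `&` vert_line D1s = [set (D1s, l11 D1s)] /\
   (S2m <= S2in ->
      graph (dom1 r1) l11 `&` graph (dom1 r1 `&` dom2 r1) (F 1%N 2%N) `&` vert_line D1s
      = [set (D1s, l11 D1s)]) /\
   (S2in < S2m ->
      graph (dom1 r1) l11 `&` graph (dom1 r1 `&` dom2 r1) (F 1%N 1%N) `&` vert_line D1s
      = [set (D1s, l11 D1s)]) /\
   (forall D, domF r1 D -> D < D1s ->
      F 1%N 1%N D < l11 D < F 1%N 2%N D)
  /\
   (forall D, domF r1 D -> D1s < D -> S2m <= S2in ->
      F 1%N 1%N D < F 1%N 2%N D < l11 D) /\
   (forall D, domF r1 D -> D1s < D -> S2in < S2m ->
      l11 D < F 1%N 1%N D < F 1%N 2%N D) )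
  /\
  (
   (* point P2 *)
   graph (dom1 r2) l12 `&` vert_line D2s = [set (D2s, l12 D2s)] /\
   (S2m <= S2in ->
      graph (dom1 r2) l12 `&` graph (dom1 r2 `&` dom2 r2) (F 2%N 2%N) `&` vert_line D2s
      = [set (D2s, l12 D2s)]) /\
   (S2in < S2m ->
      graph (dom1 r2) l12 `&` graph (dom1 r2 `&` dom2 r2) (F 2%N 1%N) `&` vert_line D2s
      = [set (D2s, l12 D2s)]) /\
   (forall D, domF r2 D -> D < D2s ->
      F 2%N 1%N D < l12 D < F 2%N 2%N D)
  /\
   (forall D, domF r2 D -> D2s < D -> S2m <= S2in ->
      F 2%N 1%N D < F 2%N 2%N D < l12 D) /\
   (forall D, domF r2 D -> D2s < D -> S2in < S2m ->
      l12 D < F 2%N 1%N D < F 2%N 2%N D) ).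
Proof.
move=> r1 r2 D1s D2s dom1 dom2 domF l11 l12 F.
have r20 : 0 < 1 - r by rewrite subr_gt0.
split.
  exact: (@half R mu2 S2m mu2_cont mu2_der mu2_0 mu2_lim S2m_pos mu2'_pos mu2'_neg mu1 m1 k1 k2 S2in r).
exact: (@half R mu2 S2m mu2_cont mu2_der mu2_0 mu2_lim S2m_pos mu2'_pos mu2'_neg mu1 m1 k1 k2 S2in (1 - r)).
Qed.
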